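(* For every integer $n\ge 0$, $$\binom{2n}{n}\,{}_3F_2\!\left(\begin{matrix}-n,\,-n,\,\tfrac12\\ -n+\tfrac12,\,2\end{matrix};1\right)=\begin{cases}\binom{n}{n/2}^2,& n \text{ even},\\[2pt] \binom{n}{(n-1)/2}^2,& n\text{ odd}.\end{cases}$$
   Context: ${}_3F_2\!\left(\begin{matrix}a_1,a_2,a_3\\ b_1,b_2\end{matrix};z\right)=\sum_{j\ge0}\frac{(a_1)_j(a_2)_j(a_3)_j}{(b_1)_j(b_2)_j}\frac{z^j}{j!}$, where $(x)_j=x(x+1)\cdots(x+j-1)$ is the Pochhammer symbol; when $a_1=-n$ is a nonpositive integer the series terminates at $j=n$. *)

(* Defs.v *)
From mathcomp Require Import all_boot all_order all_algebra.
Set Implicit Arguments. Unset Strict Implicit. Unset Printing Implicit Defensive.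
Import Order.TTheory GRing.Theory Num.Theory.
Local Open Scope ring_scope.

Definition pochhammer (R : ringType) (x : R) (j : nat) : R :=
  \prod_(i < j) (x + i%:R).

(* Terminating 3F2 with a1 = -n: the series is summed over j = 0..n
   (all terms with j > n vanish since (-n)_j = 0). *)
Definition hyp3F2_term (n : nat) (a2 a3 b1 b2 z : rat) (j : nat) : rat :=
  pochhammer (- n%:R) j * pochhammer a2 j * pochhammer a3 j
  / (pochhammer b1 j * pochhammer b2 j) * z ^+ j / (j`!)%:R.

Definition hyp3F2_terminating (n : nat) (a2 a3 b1 b2 z : rat) : rat :=
  \sum_(j < n.+1) hyp3F2_term n a2 a3 b1 b2 z j.

(* Main.v *)
Require Import Defs.
From mathcomp Require Import all_boot all_order all_algebra.
From mathcomp Require Import ring lra zify.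
Import Order.TTheory GRing.Theory Num.Theory.
Local Open Scope ring_scope.

Lemma poch_recr (x : rat) j : pochhammer x j.+1 = pochhammer x j * (x + j%:R).
Proof. by rewrite /pochhammer big_ord_recr. Qed.

Lemma poch_recl (x : rat) j : pochhammer x j.+1 = x * pochhammer (x + 1) j.
Proof.
rewrite /pochhammer big_ord_recl addr0; congr (_ * _).
by apply: eq_bigr => i _; rewrite /= -[bump 0 i]addn1 natrD; ring.
Qed.

Lemma poch_shift (x : rat) j : x != 0 ->
  pochhammer (x + 1) j = pochhammer x j * (x + j%:R) / x.
Proof.
move=> hx; have := poch_recl x j; rewrite poch_recr => ->.
by field.
Qed.

Lemma half_neq0 (k i : nat) : - k%:R + 1/2 + i%:R != 0 :> rat.
Proof.
apply/negP => /eqP h.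
have : (2 * i + 1)%:R = (2 * k)%:R :> rat.
  rewrite natrD !natrM; apply/eqP; rewrite -subr_eq0; apply/eqP.
  have -> : (2%:R * i%:R + 1%:R - 2%:R * k%:R : rat) = 2 * (- k%:R + 1/2 + i%:R) by field.
  by rewrite h mulr0.
move/eqP; rewrite eqr_nat => /eqP; lia.
Qed.

Lemma poch_half_neq0 k j : pochhammer (- k%:R + 1/2 : rat) j != 0.
Proof. by apply/prodf_neq0 => i _; apply: half_neq0. Qed.

Lemma poch2_neq0 j : pochhammer (2 : rat) j != 0.
Proof.
apply/prodf_neq0 => i _; rewrite -natrD pnatr_eq0; lia.
Qed.

Lemma poch_neg_zero (m j : nat) : (m < j)%N -> pochhammer (- m%:R : rat) j = 0.
Proof.
move=> hmj; rewrite /pochhammer (bigD1 (Ordinal hmj)) //= addNr mul0r //.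
Qed.

Definition T (m j : nat) : rat :=
  hyp3F2_term m (- m%:R) (1 / 2) (- m%:R + 1 / 2) 2 1 j.

Lemma fact_neq0 j : (j`!)%:R != 0 :> rat.
Proof. by rewrite pnatr_eq0 -lt0n fact_gt0. Qed.

Lemma T_next m j : T m j.+1 = T m j *
  ((j%:R - m%:R) ^+ 2 * (j%:R + 1/2) / ((- m%:R + 1/2 + j%:R) * (2 + j%:R) * (j%:R + 1))).
Proof.
rewrite /T /hyp3F2_term !poch_recr factS natrM !expr1n !mulr1.
have h1 := poch_half_neq0 m j; have h2 := poch2_neq0 j; have h3 := fact_neq0 j.
have h4 := half_neq0 m j.
have h5 : (2 + j%:R : rat) != 0 by rewrite -natrD pnatr_eq0.
have h6 : (j%:R + 1 : rat) != 0 by rewrite natr1 pnatr_eq0.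
rewrite -natr1. field.
have e : (1 *- m * 2 + 1 + j%:R * 2 : rat) = 2 * (- m%:R + 1/2 + j%:R) by field.
have e2 : (1 *- m * 2 + 1 + j%:R * 2 : rat) != 0 by rewrite e mulf_neq0.
by rewrite h6 h5 e2 h3 /=; apply/andP; split.
Qed.

Lemma lin_nz (e : rat) (a b : nat) :
  e = a%:R * 2 + 1 - b%:R * 2 \/ e = - (a%:R * 2 + 1 - b%:R * 2) -> e != 0.
Proof.
have H : (a%:R * 2 + 1 - b%:R * 2 : rat) != 0.
  have := half_neq0 b a; apply: contra => /eqP h; apply/eqP.
  have -> : (- b%:R + 1/2 + a%:R : rat) = (a%:R * 2 + 1 - b%:R * 2) / 2 by field.
  by rewrite h mul0r.
by case=> ->; rewrite ?oppr_eq0.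
Qed.

Lemma poch_half_neq0' (a : rat) k j : a = - k%:R + 1/2 -> pochhammer a j != 0.
Proof. by move=> ->; apply: poch_half_neq0. Qed.

Lemma poch2_neq0' (a : rat) j : a = 2 -> pochhammer a j != 0.
Proof. by move=> ->; apply: poch2_neq0. Qed.

Ltac nzlin x y := apply: (lin_nz _ x y); rewrite -?natr1;
  first [ by left; field | by right; field ].

Ltac nzside mm jj :=
  repeat (apply/andP; split);
  first [ done | by rewrite natr1 pnatr_eq0 | apply: fact_neq0
        | (apply: poch2_neq0'; rewrite -?natr1; field; done)
        | (apply: (poch_half_neq0' _ mm); rewrite -?natr1; field; done)
        | (apply: (poch_half_neq0' _ mm.+1); rewrite -?natr1; field; done)
        | (apply: (poch_half_neq0' _ mm.+2); rewrite -?natr1; field; done)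
        | nzlin mm jj | nzlin jj mm | nzlin 0%N mm | nzlin 0%N jj | nzlin mm 0%N | nzlin jj 0%N
        | nzlin mm.+1 jj | nzlin jj mm.+1 | nzlin mm.+2 jj | nzlin jj mm.+2 | nzlin 0%N mm.+1 | nzlin 0%N mm.+2
        | nzlin mm.+1 0%N | nzlin mm.+2 0%N | (apply: lt0r_neq0; have := ler0n rat mm; have := ler0n rat jj; lra)
        | idtac ].

Lemma T_prev m j : T m j = T m.+1 j *
  (((j%:R - m%:R - 1) / (m%:R + 1)) ^+ 2 * ((m%:R + 1/2) / (m%:R + 1/2 - j%:R))).
Proof.
rewrite /T /hyp3F2_term !expr1n !mulr1.
have e1 : (- m%:R : rat) = - (m.+1)%:R + 1 by rewrite -natr1; ring.
have e2 : (- m%:R + 1/2 : rat) = (- (m.+1)%:R + 1/2) + 1 by rewrite -natr1; ring.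
have nz1 : (- (m.+1)%:R : rat) != 0 by rewrite oppr_eq0 pnatr_eq0.
have nz2 : (- (m.+1)%:R + 1/2 : rat) != 0 by have := half_neq0 m.+1 0; rewrite addr0.
rewrite e2 e1 (poch_shift _ _ nz1) (poch_shift _ _ nz2).
have h1 := poch_half_neq0 m.+1 j; have h2 := poch2_neq0 j; have h3 := fact_neq0 j.
have h4 : (- (m.+1)%:R + 1/2 + j%:R : rat) != 0 by apply: half_neq0.
have h5 : (m%:R + 1 / 2 - j%:R : rat) != 0.
  have -> : (m%:R + 1/2 - j%:R : rat) = - j%:R + 1/2 + m%:R by ring.
  exact: half_neq0.
have h6 : (m%:R + 1 : rat) != 0 by rewrite natr1 pnatr_eq0.
rewrite -!natr1. field. nzside m j.
Qed.

Lemma B1 k : (k.+1 * 'C(k.*2.+1, k) = k.*2.+1 * 'C(k.*2, k))%N.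
Proof.
have := mul_bin_diag k.*2.+1 k; rewrite /= => ->.
have -> : 'C(k.*2.+1, k.+1) = 'C(k.*2.+1, k.*2.+1 - k.+1).
  by rewrite bin_sub // -addnn; lia.
by have -> : (k.*2.+1 - k.+1 = k)%N by rewrite -addnn; lia.
Qed.

Lemma B2 k : (k.+1 * 'C(k.*2.+2, k.+1) = 2 * k.*2.+1 * 'C(k.*2, k))%N.
Proof.
have := mul_bin_diag k.*2.+2 k; rewrite /= => <-.
by rewrite -mulnA -B1 -doubleS -mul2n mulnA.
Qed.

Definition u (m j : nat) : rat := ('C(m.*2, m))%:R * T m j.

Lemma u_next m j : u m j.+1 = u m j *
  ((j%:R - m%:R) ^+ 2 * (j%:R + 1/2) / ((- m%:R + 1/2 + j%:R) * (2 + j%:R) * (j%:R + 1))).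
Proof. by rewrite /u T_next mulrA. Qed.

Lemma u_prev m j : u m j = u m.+1 j *
  ((m%:R + 1 - j%:R) ^+ 2 / (2 * (m%:R + 1) * (2 * m%:R + 1 - 2 * j%:R))).
Proof.
rewrite /u T_prev.
have e : ('C(m.+1.*2, m.+1))%:R = 2 * (2 * m%:R + 1) * ('C(m.*2, m))%:R / (m%:R + 1) :> rat.
  have := B2 m; rewrite doubleS => /(congr1 (fun x => x%:R : rat)).
  rewrite !natrM -!natr1 -mul2n natrM => h.
  have hm : (m%:R + 1 : rat) != 0 by rewrite natr1 pnatr_eq0.
  by apply: (mulfI hm); rewrite h; field.
rewrite e. rewrite -!natr1. field. nzside m j.
Qed.

Lemma u_zero m j : (m < j)%N -> u m j = 0.
Proof.
move=> h; by rewrite /u /T /hyp3F2_term poch_neg_zero // !mul0r mulr0.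
Qed.

Definition S (m : nat) : rat := \sum_(j < m.+1) u m j.

Lemma S_wide m k : S m = \sum_(j < m.+1 + k) u m j.
Proof.
elim: k => [|k IH]; first by rewrite addn0.
by rewrite addnS big_ord_recr /= -IH u_zero ?addr0 //; lia.
Qed.

Definition Rc (x y : rat) : rat :=
  y * (-64 - 3*y + 51*y^+2 - 10*y^+3 + x*(-166 - 52*y + 100*y^+2 - 14*y^+3)
   + x^+2*(-151 - 85*y + 62*y^+2 - 4*y^+3) + x^+3*(-58 - 46*y + 12*y^+2) + x^+4*(-8 - 8*y))
  / ((x + 2)^+2 * (2*x + 3 - 2*y)).

Definition a0 (x : rat) := -16 * (x+1)^+2 * (2*x+5).
Definition a1 (x : rat) := -4 * (2*x^+2 + 8*x + 7).
Definition a2 (x : rat) := (x+3)^+2 * (2*x+3).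

Lemma step n j : a0 n%:R * u n j + a1 n%:R * u n.+1 j + a2 n%:R * u n.+2 j
  = Rc n%:R j.+1%:R * u n.+2 j.+1 - Rc n%:R j%:R * u n.+2 j.
Proof.
rewrite (u_prev n j) (u_prev n.+1 j) u_next /Rc /a0 /a1 /a2.
rewrite -!natr1. field. nzside n j.
Qed.

Lemma S_rec n : a0 n%:R * S n + a1 n%:R * S n.+1 + a2 n%:R * S n.+2 = 0.
Proof.
have e0 : S n = \sum_(j < n.+3) u n j by rewrite (S_wide n 2) addn2.
have e1 : S n.+1 = \sum_(j < n.+3) u n.+1 j by rewrite (S_wide n.+1 1) addn1.
have e2 : S n.+2 = \sum_(j < n.+3) u n.+2 j by rewrite (S_wide n.+2 0) addn0.
rewrite e0 e1 e2 !mulr_sumr -!big_split /=.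
rewrite -(big_mkord xpredT (fun j => a0 n%:R * u n j + a1 n%:R * u n.+1 j + a2 n%:R * u n.+2 j)).
rewrite (telescope_sumr_eq (fun j => Rc n%:R j%:R * u n.+2 j)) //.
  rewrite u_zero // mulr0 /Rc (_ : 0%:R = 0) // !mul0r; by rewrite subrr.
by move=> k _; rewrite step.
Qed.

Definition F (n : nat) : rat :=
  if ~~ odd n then ('C(n, n./2) ^ 2)%:R else ('C(n, (n - 1)./2) ^ 2)%:R.

Lemma F_ev k : F k.*2 = ('C(k.*2, k))%:R ^+ 2.
Proof. by rewrite /F odd_double /= doubleK natrX. Qed.

Lemma F_od k : F k.*2.+1 = ('C(k.*2.+1, k))%:R ^+ 2.
Proof. by rewrite /F /= odd_double /= subn1 /= doubleK natrX. Qed.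

Lemma C1 k : ('C(k.*2.+1, k))%:R = ('C(k.*2, k))%:R * (2 * k%:R + 1) / (k%:R + 1) :> rat.
Proof.
have hk : (k%:R + 1 : rat) != 0 by rewrite natr1 pnatr_eq0.
apply: (mulfI hk); have := B1 k => /(congr1 (fun x => x%:R : rat)).
rewrite !natrM -!natr1 -addnn natrD => ->. by field.
Qed.

Lemma C2 k : ('C(k.+1.*2, k.+1))%:R = ('C(k.*2, k))%:R * (2 * (2 * k%:R + 1)) / (k%:R + 1) :> rat.
Proof.
have hk : (k%:R + 1 : rat) != 0 by rewrite natr1 pnatr_eq0.
apply: (mulfI hk); have := B2 k; rewrite -doubleS => /(congr1 (fun x => x%:R : rat)).
rewrite !natrM -!natr1 -[k.*2]addnn natrD => ->; by field.
Qed.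

Lemma F_rec n : a0 n%:R * F n + a1 n%:R * F n.+1 + a2 n%:R * F n.+2 = 0.
Proof.
rewrite -[n](odd_double_half n); case: (odd n) => /=; set k := n./2.
- rewrite add1n F_od -doubleS F_ev F_od C1 C1 C2 /a0 /a1 /a2 -!natr1 -addnn ?natrD.
  field. nzside k k.
- rewrite add0n F_ev F_od -doubleS F_ev C1 C2 /a0 /a1 /a2 -!natr1 -addnn ?natrD.
  field. nzside k k.
Qed.

Lemma T0 m : T m 0 = 1.
Proof. rewrite /T /hyp3F2_term /pochhammer !big_ord0 expr0 fact0; field; done. Qed.

Lemma S_F n : S n = F n /\ S n.+1 = F n.+1.
Proof.
elim: n => [|n [IH1 IH2]].
  split.
    by rewrite /S big_ord1 /u T0 /F /= mulr1.
  rewrite /S big_ord_recr big_ord1 /= u_next /u T0 /F /=.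
  rewrite (_ : 'C(2, 1) = 2) // (_ : 'C(1, 0) = 1) //.
split => //.
have ha : a2 n%:R != 0.
  rewrite /a2; apply: lt0r_neq0; have := ler0n rat n; nra.
apply: (mulfI ha).
have := S_rec n; have := F_rec n; rewrite IH1 IH2 => h1 h2.
by apply/eqP; rewrite -(subr_eq0); apply/eqP; rewrite -h1 in h2; move: h2 => /eqP; rewrite -subr_eq0 => /eqP <-; ring.
Qed.

Theorem mainTheorem5 (n : nat) :
  ('C(2 * n, n))%:R *
    hyp3F2_terminating n (- n%:R) (1 / 2) (- n%:R + 1 / 2) 2 1
  = (if ~~ odd n then ('C(n, n./2) ^ 2)%:R else ('C(n, (n - 1)./2) ^ 2)%:R :> rat).
Proof.
have := (S_F n).1; rewrite /S /F /u => <-.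
by rewrite /hyp3F2_terminating mulr_sumr mul2n.
Qed.
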